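(* $$\sum_{n=1}^\infty \frac{H_n \binom{2n}{n}}{(2n+1)\, 2^{2n}} = 4G - \pi\log 2,$$ where $G$ is Catalan's constant.
   Context: $H_n=\sum_{k=1}^n \frac{1}{k}$ denotes the $n$-th harmonic number and $\binom{2n}{n}$ the central binomial coefficient; $G=\sum_{n=0}^\infty \frac{(-1)^n}{(2n+1)^2}$ is Catalan's constant; $\log$ is the natural logarithm. *)

(* Defs.v *)
From Stdlib Require Import Reals.
From Coquelicot Require Import Coquelicot.
Open Scope R_scope.

Definition harmonic (n : nat) : R :=
  sum_n_m (fun k : nat => / INR k) 1 n.

Definition central_binom (n : nat) : R := Binomial.C (2 * n) n.

Definition catalan : R :=
  Series (fun n : nat => (-1) ^ n / (INR (2 * n + 1)) ^ 2).

Definition term (n : nat) : R :=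
  harmonic n * central_binom n / (INR (2 * n + 1) * 2 ^ (2 * n)).

(* Main.v *)
Require Import Defs.
From Stdlib Require Import Reals Lra Lia Psatz.
From Coquelicot Require Import Coquelicot.
Open Scope R_scope.

Definition cc (n : nat) : R := central_binom n / 2 ^ (2 * n).
Definition bb (n : nat) : R := harmonic n * cc n.

Lemma harmonic_0 : harmonic 0 = 0.
Proof. unfold harmonic. rewrite sum_n_m_zero; [reflexivity | lia]. Qed.

Lemma harmonic_S n : harmonic (S n) = harmonic n + / INR (S n).
Proof. unfold harmonic. rewrite sum_n_Sm; [reflexivity | lia]. Qed.

Lemma harmonic_bounds n : 0 <= harmonic n <= INR n.
Proof.
  induction n as [|n IH].
  - rewrite harmonic_0. simpl. lra.
  - rewrite harmonic_S, S_INR.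
    assert (0 < / (INR n + 1)) by (apply Rinv_0_lt_compat; pose proof (pos_INR n); lra).
    assert (/ (INR n + 1) <= 1).
    { rewrite <- Rinv_1. apply Rinv_le_contravar; [lra|]. pose proof (pos_INR n); lra. }
    lra.
Qed.

Lemma cc_0 : cc 0 = 1.
Proof. unfold cc, central_binom, Binomial.C. simpl. field. Qed.

Lemma cc_S n : cc (S n) = cc n * (2 * INR n + 1) / (2 * INR n + 2).
Proof.
  unfold cc, central_binom, Binomial.C.
  replace (2 * S n)%nat with (S (S (2 * n))) by lia.
  replace (S (S (2 * n)) - S n)%nat with (S n) by lia.
  replace (2 * n - n)%nat with n by lia.
  replace (S (S (2 * n))) with (2 * S n)%nat at 2 by lia.
  rewrite !fact_simpl. rewrite !mult_INR. rewrite !S_INR, !mult_INR.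
  replace (2 ^ (2 * S n)) with (4 * 2 ^ (2 * n)).
  2:{ replace (2 * S n)%nat with (S (S (2 * n))) by lia. simpl. ring. }
  assert (0 < INR (Factorial.fact n)) by (apply lt_0_INR, Factorial.lt_O_fact).
  assert (0 < INR (Factorial.fact (2 * n))) by (apply lt_0_INR, Factorial.lt_O_fact).
  assert (0 < 2 ^ (2 * n)) by (apply pow_lt; lra).
  pose proof (pos_INR n).
  simpl INR. field. repeat split; lra.
Qed.

Lemma cc_bounds n : 0 < cc n <= 1.
Proof.
  induction n as [|n IH].
  - rewrite cc_0; lra.
  - rewrite cc_S. pose proof (pos_INR n).
    split.
    + apply Rdiv_lt_0_compat; [apply Rmult_lt_0_compat|]; lra.
    + apply (Rmult_le_reg_r (2 * INR n + 2)); [lra|].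
      unfold Rdiv. rewrite Rmult_assoc, Rinv_l by lra. nra.
Qed.

Lemma term_eq n : term n = bb n / (2 * INR n + 1).
Proof.
  unfold term, bb, cc. rewrite plus_INR, mult_INR. simpl INR.
  assert (0 < 2 ^ (2 * n)) by (apply pow_lt; lra). pose proof (pos_INR n).
  field. lra.
Qed.

Definition R1 (a : nat -> R) : Prop := Rbar_le 1 (CV_radius a).

Lemma R1_ext a b : (forall n, a n = b n) -> R1 a -> R1 b.
Proof. intros H. unfold R1. rewrite (CV_radius_ext a b H). auto. Qed.

Lemma R1_bounded a M : (forall n, Rabs (a n) <= M) -> R1 a.
Proof.
  intros H. unfold R1. destruct (CV_radius_bounded a) as [Hub _].
  apply Hub. exists M. intros n. rewrite pow1, Rmult_1_r. auto.
Qed.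

Lemma R1_inside a z : R1 a -> Rabs z < 1 -> Rbar_lt (Rabs z) (CV_radius a).
Proof.
  unfold R1. destruct (CV_radius a) as [r| |]; simpl; intros; lra || auto.
Qed.

Lemma R1_ex a z : R1 a -> Rabs z < 1 -> ex_pseries a z.
Proof. intros; apply CV_radius_inside, R1_inside; auto. Qed.

Lemma R1_derive a : R1 a -> R1 (PS_derive a).
Proof. unfold R1. rewrite CV_radius_derive. auto. Qed.

Lemma R1_incr a : R1 a -> R1 (PS_incr_1 a).
Proof. unfold R1. rewrite CV_radius_incr_1. auto. Qed.

Lemma R1_decr a : R1 a -> R1 (PS_decr_1 a).
Proof. unfold R1. rewrite CV_radius_decr_1. auto. Qed.

Lemma R1_plus a b : R1 a -> R1 b -> R1 (PS_plus a b).
Proof.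
  unfold R1. intros Ha Hb. eapply Rbar_le_trans; [|apply CV_radius_plus].
  destruct (CV_radius a) as [ra| |], (CV_radius b) as [rb| |]; simpl in *; try tauto.
  apply Rmin_glb; auto.
Qed.

Lemma R1_scal c a : R1 a -> R1 (PS_scal c a).
Proof.
  intros Ha. destruct (Req_dec c 0) as [->|Hc].
  - apply R1_ext with (fun _ => 0).
    + intros n. unfold PS_scal, scal; simpl; unfold mult; simpl. ring.
    + unfold R1. rewrite CV_radius_const_0. simpl. auto.
  - unfold R1. rewrite CV_radius_scal; auto.
Qed.

Lemma R1_lin a b al be : R1 a -> R1 b -> R1 (fun n => al * a n + be * b n).
Proof.
  intros Ha Hb. apply R1_ext with (PS_plus (PS_scal al a) (PS_scal be b)).
  - intros n. reflexivity.
  - apply R1_plus; apply R1_scal; auto.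
Qed.

Lemma PS_lin a b al be z : R1 a -> R1 b -> Rabs z < 1 ->
  al * PSeries a z + be * PSeries b z = PSeries (fun n => al * a n + be * b n) z.
Proof.
  intros Ha Hb Hz.
  rewrite <- (PSeries_scal al a), <- (PSeries_scal be b).
  rewrite <- PSeries_plus.
  - apply PSeries_ext. intros n. reflexivity.
  - apply R1_ex; auto. apply R1_scal; auto.
  - apply R1_ex; auto. apply R1_scal; auto.
Qed.

Definition nD (a : nat -> R) (n : nat) : R := INR n * a n.

Lemma nD_eq a : forall n, PS_incr_1 (PS_derive a) n = nD a n.
Proof. intros [|n]; unfold nD, PS_derive; simpl; [rewrite Rmult_0_l; reflexivity|reflexivity]. Qed.

Lemma R1_nD a : R1 a -> R1 (nD a).
Proof. intros. apply R1_ext with (PS_incr_1 (PS_derive a)); [apply nD_eq|].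
  apply R1_incr, R1_derive; auto. Qed.

Lemma PS_zderive a z : z * PSeries (PS_derive a) z = PSeries (nD a) z.
Proof. rewrite <- PSeries_incr_1. apply PSeries_ext, nD_eq. Qed.

Lemma PS_incr a z : z * PSeries a z = PSeries (PS_incr_1 a) z.
Proof. rewrite PSeries_incr_1. reflexivity. Qed.

Lemma R1_cc : R1 cc.
Proof. apply R1_bounded with 1. intros n. destruct (cc_bounds n). rewrite Rabs_right; lra. Qed.

Lemma bb_bounds n : 0 <= bb n <= INR n.
Proof.
  unfold bb. destruct (harmonic_bounds n), (cc_bounds n). split; [nra|].
  apply Rle_trans with (harmonic n * 1); nra.
Qed.

Definition dd (n : nat) : R := match n with O => 0 | S m => bb m / INR (S m) end.

Lemma R1_bb : R1 bb.
Proof.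
  apply R1_ext with (PS_derive dd).
  - intros n. unfold PS_derive, dd. field. apply not_0_INR. lia.
  - apply R1_derive. apply R1_bounded with 1. intros [|n]; cbv beta iota delta [dd].
    + rewrite Rabs_R0; lra.
    + destruct (bb_bounds n). pose proof (pos_INR n).
      rewrite Rabs_right.
      * apply Rle_trans with (INR n / INR (S n)).
        { unfold Rdiv. apply Rmult_le_compat_r; [|lra]. left; apply Rinv_0_lt_compat, lt_0_INR; lia. }
        rewrite S_INR. apply (Rmult_le_reg_r (INR n + 1)); [lra|]. unfold Rdiv. rewrite Rmult_assoc, Rinv_l by lra. lra.
      * apply Rle_ge, Rdiv_le_0_compat; [lra|]. apply lt_0_INR; lia.
Qed.

Lemma term_bounds n : 0 <= term n <= 1.
Proof.
  rewrite term_eq. destruct (bb_bounds n). pose proof (pos_INR n). split.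
  - apply Rdiv_le_0_compat; lra.
  - apply (Rmult_le_reg_r (2 * INR n + 1)); [lra|]. unfold Rdiv. rewrite Rmult_assoc, Rinv_l by lra. lra.
Qed.

Lemma R1_term : R1 term.
Proof. apply R1_bounded with 1. intros n. destruct (term_bounds n). rewrite Rabs_right; lra. Qed.

Lemma ode_f z : Rabs z < 1 ->
  (1 - z) * PSeries (PS_derive cc) z = / 2 * PSeries cc z.
Proof.
  intros Hz.
  replace ((1 - z) * PSeries (PS_derive cc) z) with
    (1 * PSeries (PS_derive cc) z + (-1) * (z * PSeries (PS_derive cc) z)) by ring.
  rewrite PS_zderive. rewrite PS_lin; auto.
  2: apply R1_derive, R1_cc.
  2: apply R1_nD, R1_cc.
  rewrite <- PSeries_scal. apply PSeries_ext. intros n.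
  unfold PS_derive, nD, PS_scal. rewrite S_INR, cc_S. change (scal (/2) (cc n)) with (/2 * cc n).
  field. pose proof (pos_INR n). lra.
Qed.

Lemma ode_h z : Rabs z < 1 ->
  (1 - z) * PSeries (nD bb) z = / 2 * (z * PSeries bb z) + (PSeries cc z - 1).
Proof.
  intros Hz.
  rewrite (PSeries_decr_1 cc z) by (apply R1_ex; auto; apply R1_cc).
  replace (cc 0%nat) with 1 by (rewrite cc_0; reflexivity).
  replace (1 + z * PSeries (PS_decr_1 cc) z - 1) with (1 * (z * PSeries (PS_decr_1 cc) z)) by ring.
  rewrite !PS_incr.
  replace ((1 - z) * PSeries (nD bb) z) with
    (1 * PSeries (nD bb) z + (-1) * (z * PSeries (nD bb) z)) by ring.
  rewrite PS_incr.
  rewrite !PS_lin; auto.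
  2: apply R1_incr, R1_bb.
  2: apply R1_incr, R1_decr, R1_cc.
  2: apply R1_nD, R1_bb.
  2: apply R1_incr, R1_nD, R1_bb.
  apply PSeries_ext. intros [|n]; unfold nD, PS_decr_1, PS_incr_1.
  - change zero with 0. simpl. ring.
  - unfold bb. rewrite harmonic_S, cc_S. rewrite !S_INR. field.
    pose proof (pos_INR n). lra.
Qed.

Lemma term_rel z : Rabs z < 1 ->
  PSeries term z + 2 * (z * PSeries (PS_derive term) z) = PSeries bb z.
Proof.
  intros Hz. rewrite PS_zderive.
  replace (PSeries term z) with (1 * PSeries term z) by ring.
  rewrite PS_lin; auto.
  2: apply R1_term.
  2: apply R1_nD, R1_term.
  apply PSeries_ext. intros n. unfold nD. rewrite term_eq. field.
  pose proof (pos_INR n). lra.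
Qed.

Lemma const_interval (g : R -> R) a b : a <= b ->
  (forall x, a <= x <= b -> continuity_pt g x) ->
  (forall x, a < x < b -> is_derive g x 0) -> g b = g a.
Proof.
  intros Hab Hc Hd.
  destruct (MVT_gen g a b (fun _ => 0)) as [c [_ Hc']].
  - intros x Hx. apply Hd. rewrite Rmin_left, Rmax_right in Hx; lra.
  - intros x Hx. apply Hc. rewrite Rmin_left, Rmax_right in Hx; lra.
  - lra.
Qed.

Lemma cont_of_derive (g : R -> R) x d : is_derive g x d -> continuity_pt g x.
Proof.
  intros H. apply continuity_pt_filterlim. apply (ex_derive_continuous g x).
  exists d. exact H.
Qed.

Definition xu (u : R) : R := 2 * u / (1 + u ^ 2).
Definition zu (u : R) : R := (xu u) ^ 2.
Definition su (u : R) : R := (1 - u ^ 2) / (1 + u ^ 2).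

Lemma one_plus_sq_pos u : 0 < 1 + u ^ 2.
Proof. nra. Qed.

Lemma one_minus_zu u : 1 - zu u = su u ^ 2.
Proof. unfold zu, xu, su. pose proof (one_plus_sq_pos u). field. lra. Qed.

Lemma zu_bounds u : -1 < u < 1 -> 0 <= zu u < 1.
Proof.
  intros Hu. split. { apply pow2_ge_0. }
  assert (0 < su u ^ 2).
  { unfold su. pose proof (one_plus_sq_pos u). assert (0 < (1 - u^2)/(1+u^2)).
    { apply Rdiv_lt_0_compat; nra. } nra. }
  pose proof (one_minus_zu u). lra.
Qed.

Lemma zu_abs u : -1 < u < 1 -> Rabs (zu u) < 1.
Proof. intros Hu. destruct (zu_bounds u Hu). rewrite Rabs_right; lra. Qed.

Lemma zu_deriv u : is_derive zu u (8 * u * (1 - u ^ 2) / (1 + u ^ 2) ^ 3).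
Proof.
  unfold zu, xu. pose proof (one_plus_sq_pos u). auto_derive.
  - simpl in *. lra.
  - simpl. field. simpl in *; lra.
Qed.

Lemma su_deriv u : is_derive su u (- 4 * u / (1 + u ^ 2) ^ 2).
Proof.
  unfold su. pose proof (one_plus_sq_pos u). auto_derive.
  - simpl in *. lra.
  - simpl. field. simpl in *; lra.
Qed.

Lemma xu_deriv u : is_derive xu u (2 * (1 - u ^ 2) / (1 + u ^ 2) ^ 2).
Proof.
  unfold xu. pose proof (one_plus_sq_pos u). auto_derive.
  - simpl in *. lra.
  - simpl. field. simpl in *; lra.
Qed.

Lemma PS_comp_deriv a u : R1 a -> -1 < u < 1 ->
  is_derive (fun t => PSeries a (zu t)) u
    (8 * u * (1 - u ^ 2) / (1 + u ^ 2) ^ 3 * PSeries (PS_derive a) (zu u)).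
Proof.
  intros Ha Hu.
  apply (is_derive_comp (PSeries a) zu u).
  - apply is_derive_PSeries. apply R1_inside; auto. apply zu_abs; auto.
  - apply zu_deriv.
Qed.

Lemma f_closed u : -1 < u < 1 -> PSeries cc (zu u) * su u = 1.
Proof.
  intros Hu.
  set (g := fun t => PSeries cc (zu t) * su t).
  assert (Hd : forall t, -1 < t < 1 -> is_derive g t 0).
  { intros t Ht. unfold g.
    pose proof (PS_comp_deriv cc t R1_cc Ht) as H1.
    pose proof (su_deriv t) as H2.
    pose proof (is_derive_mult _ _ t _ _ H1 H2 ltac:(intros; apply Rmult_comm)) as H3.
    simpl in H3. unfold mult, plus in H3; simpl in H3.
    eapply is_derive_ext; [|refine (eq_ind _ (fun d => is_derive _ t d) H3 _ _)].
    - intros; reflexivity.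
    - pose proof (ode_f (zu t) (zu_abs t Ht)) as Ho.
      rewrite one_minus_zu in Ho. unfold su in *.
      pose proof (one_plus_sq_pos t).
      set (F := PSeries cc (zu t)) in *. set (D := PSeries (PS_derive cc) (zu t)) in *.
      assert (Ho' : D = F / 2 / ((1 - t ^ 2) / (1 + t ^ 2)) ^ 2).
      { assert (1 - t^2 <> 0) by nra.
        assert (((1 - t ^ 2) / (1 + t ^ 2)) ^ 2 <> 0).
        { apply pow_nonzero. unfold Rdiv. apply Rmult_integral_contrapositive; split; auto.
          apply Rinv_neq_0_compat; lra. }
        apply (Rmult_eq_reg_l (((1 - t ^ 2) / (1 + t ^ 2)) ^ 2)); auto.
        rewrite Ho. field. split; [lra|auto]. }
      rewrite Ho'. match goal with |- ?a = ?b => change (a = b :> R) end. field. split; [lra|nra]. }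
  assert (Hc : forall t, -1 < t < 1 -> continuity_pt g t).
  { intros t Ht. apply cont_of_derive with 0. auto. }
  assert (H0 : g 0 = 1).
  { unfold g, zu, xu, su. replace ((2 * 0 / (1 + 0 ^ 2)) ^ 2) with 0 by (simpl; field).
    rewrite PSeries_0, cc_0. simpl; field. }
  destruct (Rle_dec 0 u).
  - rewrite <- H0. change (g u = g 0). apply const_interval; auto.
    + intros; apply Hc; lra.
    + intros; apply Hd; lra.
  - rewrite <- H0. change (g u = g 0). symmetry. apply const_interval; [lra| |].
    + intros; apply Hc; lra.
    + intros; apply Hd; lra.
Qed.

Lemma h_closed u : 0 <= u < 1 -> PSeries bb (zu u) * su u = - 2 * ln (1 - u ^ 2).
Proof.
  intros Hu.
  set (g := fun t => PSeries bb (zu t) * su t + 2 * ln (1 - t ^ 2)).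
  assert (Hd : forall t, -1 < t < 1 -> is_derive g t
      (8 * t * (1 - t ^ 2) / (1 + t ^ 2) ^ 3 * PSeries (PS_derive bb) (zu t) * su t
       + PSeries bb (zu t) * (- 4 * t / (1 + t ^ 2) ^ 2) + 2 * (- 2 * t / (1 - t ^ 2)))).
  { intros t Ht. unfold g.
    pose proof (PS_comp_deriv bb t R1_bb Ht) as H1.
    pose proof (su_deriv t) as H2.
    pose proof (is_derive_mult _ _ t _ _ H1 H2 ltac:(intros; apply Rmult_comm)) as H3.
    assert (H4 : is_derive (fun t => 2 * ln (1 - t ^ 2)) t (2 * (- 2 * t / (1 - t ^ 2)))).
    { auto_derive. - simpl. nra. - simpl. field. nra. }
    pose proof (is_derive_plus _ _ t _ _ H3 H4) as H5.
    simpl in H5. unfold mult, plus in H5; simpl in H5. exact H5. }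
  assert (Hd0 : forall t, 0 < t < 1 -> is_derive g t 0).
  { intros t Ht. eapply is_derive_ext; [|refine (eq_ind _ (fun d => is_derive _ t d) (Hd t ltac:(lra)) _ _)].
    - intros; reflexivity.
    - match goal with |- ?a = ?b => change (a = b :> R) end.
      assert (Hz := zu_abs t ltac:(lra)).
      pose proof (PS_zderive bb (zu t)) as HY.
      pose proof (ode_h (zu t) Hz) as Ho.
      pose proof (f_closed t ltac:(lra)) as Hf.
      pose proof (one_minus_zu t) as Hs.
      pose proof (one_plus_sq_pos t).
      assert (Hz0 : zu t <> 0).
      { unfold zu, xu. apply pow_nonzero. unfold Rdiv. apply Rmult_integral_contrapositive.
        split; [lra|]. apply Rinv_neq_0_compat; lra. }
      assert (Hs0 : su t <> 0).
      { unfold su. unfold Rdiv. apply Rmult_integral_contrapositive.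
        split; [nra|]. apply Rinv_neq_0_compat; lra. }
      assert (H1z : 1 - zu t <> 0). { rewrite Hs. apply pow_nonzero; auto. }
      set (h := PSeries bb (zu t)) in *. set (f := PSeries cc (zu t)) in *.
      set (Dh := PSeries (PS_derive bb) (zu t)) in *.
      set (Y := PSeries (nD bb) (zu t)) in *.
      assert (EDh : Dh = (/ 2 * (zu t * h) + (f - 1)) / ((1 - zu t) * zu t)).
      { rewrite <- Ho, <- HY. field. auto. }
      assert (Ef : f = 1 / su t). { rewrite <- Hf. field. auto. }
      rewrite EDh, Ef. unfold su in *. unfold zu, xu in *. field.
      repeat split; try lra; try nra. }
  assert (Hc : forall t, 0 <= t < 1 -> continuity_pt g t).
  { intros t Ht. eapply cont_of_derive. apply Hd. lra. }
  assert (H0 : g 0 = 0).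
  { unfold g, zu, xu, su. replace ((2 * 0 / (1 + 0 ^ 2)) ^ 2) with 0 by (simpl; field).
    rewrite PSeries_0. unfold bb. rewrite harmonic_0. replace (1 - 0 ^ 2) with 1 by (simpl; ring).
    rewrite ln_1. ring. }
  destruct (Req_dec u 0) as [->|Hu0].
  - unfold su. replace (1 - 0 ^ 2) with 1 by (simpl; ring). rewrite ln_1.
    unfold zu, xu. replace ((2 * 0 / (1 + 0 ^ 2)) ^ 2) with 0 by (simpl; field).
    rewrite PSeries_0. unfold bb. rewrite harmonic_0. ring.
  - assert (g u = g 0).
    { apply const_interval; [lra| |].
      + intros; apply Hc; lra.
      + intros; apply Hd0; lra. }
    rewrite H0 in H. unfold g in H. lra.
Qed.

Definition Qf (u : R) : R := xu u * PSeries term (zu u).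

Lemma Q_deriv u : 0 <= u < 1 -> is_derive Qf u (- 4 * ln (1 - u ^ 2) / (1 + u ^ 2)).
Proof.
  intros Hu. assert (Hu' : -1 < u < 1) by lra.
  pose proof (PS_comp_deriv term u R1_term Hu') as H1.
  pose proof (xu_deriv u) as H2.
  pose proof (is_derive_mult _ _ u _ _ H2 H1 ltac:(intros; apply Rmult_comm)) as H3.
  simpl in H3. unfold mult, plus in H3; simpl in H3.
  eapply is_derive_ext; [|refine (eq_ind _ (fun d => is_derive _ u d) H3 _ _)].
  - intros; reflexivity.
  - match goal with |- ?a = ?b => change (a = b :> R) end.
    pose proof (term_rel (zu u) (zu_abs u Hu')) as Ht.
    pose proof (h_closed u Hu) as Hh.
    pose proof (one_plus_sq_pos u).
    assert (Hs0 : su u <> 0).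
    { unfold su. unfold Rdiv. apply Rmult_integral_contrapositive.
      split; [nra|]. apply Rinv_neq_0_compat; lra. }
    set (p := PSeries term (zu u)) in *. set (Dp := PSeries (PS_derive term) (zu u)) in *.
    set (h := PSeries bb (zu u)) in *.
    assert (Ep : p = h - 2 * (zu u * Dp)) by lra.
    assert (Eh : h = - 2 * ln (1 - u ^ 2) / su u). { rewrite <- Hh. field. auto. }
    rewrite Ep, Eh. unfold su in *. unfold zu, xu in *. field.
    repeat split; try lra; try nra.
Qed.

Definition wu (t : R) : R := (1 - t) / (1 + t).

Lemma wu_deriv t : -1 < t -> is_derive wu t (- 2 / (1 + t) ^ 2).
Proof. intros H. unfold wu. auto_derive. - lra. - simpl. field. lra. Qed.

Definition kf (t : R) : R := ln (1 + t) / (1 + t ^ 2).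
Definition Kf (w : R) : R := RInt kf 0 w.

Lemma kf_deriv t : -1 < t -> ex_derive kf t.
Proof. intros H. unfold kf. auto_derive. repeat split; try lra. simpl. nra. Qed.

Lemma kf_cont t : -1 < t -> continuous kf t.
Proof. intros H. apply (ex_derive_continuous kf t). apply kf_deriv; auto. Qed.

Lemma Kf_deriv w : -1 < w -> is_derive Kf w (kf w).
Proof.
  intros Hw. apply is_derive_RInt with 0.
  - assert (He : 0 < (w + 1) / 2) by lra.
    exists (mkposreal _ He). intros b Hb.
    unfold ball in Hb; simpl in Hb; unfold AbsRing_ball, abs, minus, plus, opp in Hb; simpl in Hb.
    apply Rabs_def2 in Hb.
    unfold Kf. apply (RInt_correct kf). apply (ex_RInt_continuous kf). intros z Hz. apply kf_cont.
    assert (Rmin 0 b > -1). { unfold Rmin; destruct (Rle_dec 0 b); lra. }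
    lra.
  - apply kf_cont; auto.
Qed.

Lemma Kf_cont w : -1 < w -> continuity_pt Kf w.
Proof. intros H. eapply cont_of_derive. apply Kf_deriv; auto. Qed.

Lemma Kf_0 : Kf 0 = 0.
Proof. unfold Kf. rewrite RInt_point. reflexivity. Qed.

Lemma Kf_1 : Kf 1 = PI * ln 2 / 8.
Proof.
  set (N := fun w => Kf w - Kf (wu w) + ln 2 * atan (wu w)).
  assert (Hd : forall w, -1 < w -> is_derive N w
    (kf w - (- 2 / (1 + w) ^ 2) * kf (wu w) + ln 2 * ((- 2 / (1 + w) ^ 2) * / (1 + (wu w)²)))).
  { intros w Hw. unfold N.
    assert (Hwu : -1 < wu w). { unfold wu. apply (Rmult_lt_reg_r (1 + w)); [lra|].
      unfold Rdiv. rewrite Rmult_assoc, Rinv_l by lra. lra. }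
    apply (is_derive_plus (fun w => Kf w - Kf (wu w)) (fun w => ln 2 * atan (wu w))).
    - apply (is_derive_minus Kf (fun w => Kf (wu w))).
      + apply Kf_deriv; auto.
      + apply (is_derive_comp Kf wu). apply Kf_deriv; auto. apply wu_deriv; auto.
    - apply (is_derive_scal (fun w => atan (wu w))).
      apply (is_derive_comp atan wu). apply is_derive_atan. apply wu_deriv; auto. }
  assert (Hd0 : forall w, 0 < w < 1 -> is_derive N w 0).
  { intros w Hw. eapply is_derive_ext; [|refine (eq_ind _ (fun d => is_derive _ w d) (Hd w ltac:(lra)) _ _)].
    - intros; reflexivity.
    - match goal with |- ?a = ?b => change (a = b :> R) end.
      unfold kf, Rsqr.
      assert (E1 : 1 + wu w = 2 / (1 + w)). { unfold wu. field. lra. }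
      rewrite E1. rewrite ln_div by lra. unfold wu. field. repeat split; try lra; nra. }
  assert (Hc : forall w, 0 <= w <= 1 -> continuity_pt N w).
  { intros w Hw. eapply cont_of_derive. apply Hd. lra. }
  pose proof (const_interval N 0 1 ltac:(lra) Hc Hd0) as H.
  unfold N, wu in H.
  replace ((1 - 1) / (1 + 1)) with 0 in H by field.
  replace ((1 - 0) / (1 + 0)) with 1 in H by field.
  rewrite Kf_0, atan_0, atan_1 in H. lra.
Qed.

Definition tc (n : nat) : R := (-1) ^ n / (INR (2 * n + 1)) ^ 2.
Definition Ti2 (w : R) : R := w * PSeries tc (w ^ 2).

Lemma R1_tc : R1 tc.
Proof.
  apply R1_bounded with 1. intros n. unfold tc. rewrite Rabs_div.
  - rewrite pow_1_abs. rewrite Rabs_right.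
    + assert (1 <= INR (2 * n + 1)) by (apply (le_INR 1); lia).
      assert (1 <= INR (2 * n + 1) ^ 2) by nra.
      apply (Rmult_le_reg_r (INR (2 * n + 1) ^ 2)); [lra|].
      unfold Rdiv. rewrite Rmult_1_l, Rinv_l by lra. lra.
    + apply Rle_ge, pow2_ge_0.
  - apply pow_nonzero. apply not_0_INR. lia.
Qed.

Lemma sq_abs w : -1 < w < 1 -> Rabs (w ^ 2) < 1.
Proof. intros H. rewrite Rabs_right by (apply Rle_ge, pow2_ge_0). nra. Qed.

Lemma Ti2_deriv w : 0 < w < 1 -> is_derive Ti2 w (atan w / w).
Proof.
  intros Hw.
  assert (Hy : Rabs (w ^ 2) < 1) by (apply sq_abs; lra).
  assert (H1 : is_derive (fun t => PSeries tc (t ^ 2)) w (2 * w * PSeries (PS_derive tc) (w ^ 2))).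
  { apply (is_derive_comp (PSeries tc) (fun t => t ^ 2)).
    - apply is_derive_PSeries. apply R1_inside; auto. apply R1_tc.
    - auto_derive; auto. simpl; ring. }
  assert (H2 : is_derive (fun t : R => t) w 1) by (auto_derive; auto).
  pose proof (is_derive_mult _ _ w _ _ H2 H1 ltac:(intros; apply Rmult_comm)) as H3.
  simpl in H3. unfold mult, plus in H3; simpl in H3.
  eapply is_derive_ext; [|refine (eq_ind _ (fun d => is_derive _ w d) H3 _ _)].
  - intros; reflexivity.
  - match goal with |- ?a = ?b => change (a = b :> R) end.
    rewrite atan_Reals by (rewrite Rabs_right; lra).
    change (w * (w * 1)) with (w ^ 2).
    replace (1 * PSeries tc (w ^ 2) + w * (2 * w * PSeries (PS_derive tc) (w ^ 2)))
      with (1 * PSeries tc (w ^ 2) + 2 * ((w ^ 2) * PSeries (PS_derive tc) (w ^ 2))) by ring.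
    rewrite PS_zderive, PS_lin; auto.
    2: apply R1_tc. 2: apply R1_nD, R1_tc.
    replace (w * PSeries (fun n : nat => (-1) ^ n / INR (S (n + n))) (w ^ 2) / w)
      with (PSeries (fun n : nat => (-1) ^ n / INR (S (n + n))) (w ^ 2)) by (field; lra).
    apply PSeries_ext. intros n. unfold tc, nD.
    replace (INR (2 * n + 1)) with (2 * INR n + 1) by (rewrite plus_INR, mult_INR; simpl; ring).
    replace (INR (S (n + n))) with (2 * INR n + 1) by (rewrite S_INR, plus_INR; ring).
    pose proof (pos_INR n). field. lra.
Qed.

Definition Ebar (w : R) : R :=
  -4 * (2 * ln 2 * (PI / 4 - atan w) - atan w * ln w - catalan + Ti2 w - 2 * Kf 1 + 2 * Kf w).

Lemma Ebar_deriv w : 0 < w < 1 ->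
  is_derive Ebar w (4 * (2 * ln 2 + ln w - 2 * ln (1 + w)) / (1 + w ^ 2)).
Proof.
  intros Hw. unfold Ebar. auto_derive.
  - split; [lra|]. split; [|split; [|exact I]].
    + exists (atan w / w). apply Ti2_deriv; auto.
    + exists (kf w). apply Kf_deriv; lra.
  - replace (Derive (fun x : R => Ti2 x) w) with (atan w / w)
      by (symmetry; apply is_derive_unique; apply Ti2_deriv; auto).
    replace (Derive (fun x : R => Kf x) w) with (kf w)
      by (symmetry; apply is_derive_unique; apply Kf_deriv; lra).
    unfold kf. field. split; [nra|lra].
Qed.

Lemma lim_inv_S : is_lim_seq (fun n => / INR (S n)) 0.
Proof.
  assert (H : is_lim_seq (fun n => INR (S n)) p_infty).
  { apply (is_lim_seq_incr_1 INR p_infty). apply is_lim_seq_INR. }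
  pose proof (is_lim_seq_inv _ _ H ltac:(discriminate)) as H2. simpl in H2. exact H2.
Qed.

Lemma INR_2n1 n : INR (2 * n + 1) = 2 * INR n + 1.
Proof. rewrite plus_INR, mult_INR. simpl. ring. Qed.

Lemma tc_ratio n : Rabs (tc (S n) / tc n) = (2 * INR n + 1) ^ 2 / (2 * INR n + 3) ^ 2.
Proof.
  pose proof (pos_INR n).
  replace (tc (S n) / tc n) with (- ((2 * INR n + 1) ^ 2 / (2 * INR n + 3) ^ 2)).
  - rewrite Rabs_Ropp, Rabs_right; [reflexivity|].
    apply Rle_ge, Rdiv_le_0_compat; [apply pow2_ge_0|]. apply pow_lt; lra.
  - unfold tc. rewrite !INR_2n1, S_INR.
    assert ((-1) ^ n <> 0) by (apply pow_nonzero; lra).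
    simpl pow. field. repeat split; auto; lra.
Qed.

Lemma radius_tc : CV_radius tc = 1.
Proof.
  replace (Finite 1) with (Finite (/ 1)) by (f_equal; field).
  apply CV_radius_finite_DAlembert; [| lra |].
  - intros n. unfold tc. apply Rmult_integral_contrapositive; split.
    + apply pow_nonzero; lra.
    + apply Rinv_neq_0_compat, pow_nonzero, not_0_INR; lia.
  - apply is_lim_seq_ext with (fun n => (2 * INR n + 1) ^ 2 / (2 * INR n + 3) ^ 2).
    { intros n; rewrite tc_ratio; reflexivity. }
    apply is_lim_seq_le_le with (fun n => 1 - 4 * / INR (S n)) (fun _ => 1).
    + intros n. pose proof (pos_INR n). rewrite S_INR. split.
      * assert (0 < (2 * INR n + 3) ^ 2) by (apply pow_lt; lra).
        apply (Rmult_le_reg_r ((2 * INR n + 3) ^ 2)); auto.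
        unfold Rdiv. rewrite Rmult_assoc, Rinv_l by lra.
        rewrite Rmult_minus_distr_r, Rmult_1_l.
        assert (4 * / (INR n + 1) * (2 * INR n + 3) ^ 2 = 4 * (2 * INR n + 3) ^ 2 / (INR n + 1)) by (field; lra).
        rewrite H1.
        assert ((2 * INR n + 3) ^ 2 - (2 * INR n + 1) ^ 2 <= 4 * (2 * INR n + 3) ^ 2 / (INR n + 1)).
        { apply (Rmult_le_reg_r (INR n + 1)); [lra|]. unfold Rdiv. rewrite Rmult_assoc, Rinv_l by lra. nra. }
        lra.
      * assert (0 < (2 * INR n + 3) ^ 2) by (apply pow_lt; lra).
        apply (Rmult_le_reg_r ((2 * INR n + 3) ^ 2)); auto.
        unfold Rdiv. rewrite Rmult_assoc, Rinv_l by lra. nra.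
    + replace (Finite 1) with (Finite (1 - 4 * 0)) by (f_equal; ring).
      apply is_lim_seq_minus'. apply is_lim_seq_const.
      pose proof (is_lim_seq_scal_l _ 4 0 lim_inv_S) as HH.
      replace (Finite 0) with (Rbar_mult 4 0) by (simpl; f_equal; ring). exact HH.
    + apply is_lim_seq_const.
Qed.

Lemma ex_pseries_tc_1 : ex_pseries tc 1.
Proof.
  unfold ex_pseries.
  apply ex_series_ext with tc.
  { intros n. unfold scal; simpl. unfold mult; simpl. rewrite pow_n_pow, pow1, Rmult_1_l. reflexivity. }
  apply (@ex_series_le R_AbsRing R_CompleteNormedModule) with (fun n => (/ INR (S n) - / INR (S (S n))) * 2).
  - intros n. change (Rabs (tc n) <= (/ INR (S n) - / INR (S (S n))) * 2). unfold tc.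
    rewrite Rabs_div by (apply pow_nonzero, not_0_INR; lia).
    rewrite pow_1_abs, INR_2n1, !S_INR. pose proof (pos_INR n).
    rewrite Rabs_right by (apply Rle_ge, pow2_ge_0).
    replace ((/ (INR n + 1) - / (INR n + 1 + 1)) * 2) with (2 / ((INR n + 1) * (INR n + 2))) by (field; lra).
    assert (0 < (2 * INR n + 1) ^ 2) by (apply pow_lt; lra).
    apply (Rmult_le_reg_r ((2 * INR n + 1) ^ 2)); auto.
    unfold Rdiv. rewrite Rmult_1_l, Rinv_l by lra.
    rewrite Rmult_assoc. rewrite (Rmult_comm (/ _)).
    apply (Rmult_le_reg_r ((INR n + 1) * (INR n + 2))); [nra|].
    rewrite !Rmult_assoc, Rinv_l by nra. nra.
  - apply ex_series_scal_r. exists (/ INR 1 - 0).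
    unfold is_series.
    apply (is_lim_seq_ext (fun N => / INR 1 - / INR (S (S N))) (sum_n (fun n => / INR (S n) - / INR (S (S n)))) (/ INR 1 - 0)).
    + intros N. induction N as [|N IH].
      * rewrite sum_O. reflexivity.
      * rewrite sum_Sn, <- IH. unfold plus; simpl. ring.
    + apply is_lim_seq_minus'. apply is_lim_seq_const.
      apply (is_lim_seq_incr_1 (fun n => / INR (S n))). apply lim_inv_S.
Qed.

Lemma cont_eps f x : continuity_pt f x -> forall eps, 0 < eps ->
  exists del, 0 < del /\ forall y, Rabs (y - x) < del -> Rabs (f y - f x) < eps.
Proof.
  intros H eps Heps. destruct (H eps Heps) as [del [Hd Hf]].
  exists del. split; auto. intros y Hy.
  destruct (Req_dec y x) as [->|Hne].
  - rewrite Rminus_diag, Rabs_R0; auto.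
  - apply Hf. split; [split; [exact I| auto]|]. exact Hy.
Qed.

Lemma ex_derive_cont f x : ex_derive f x -> continuity_pt f x.
Proof. intros [d H]. eapply cont_of_derive; eauto. Qed.

Lemma PSeries_tc_1 : PSeries tc 1 = catalan.
Proof.
  unfold PSeries, catalan. apply Series_ext. intros n. rewrite pow1, Rmult_1_r. reflexivity.
Qed.

Lemma tc_left eps : 0 < eps -> exists del, 0 < del /\
  forall y, 1 - del < y < 1 -> Rabs (PSeries tc y - catalan) < eps.
Proof.
  intros Heps.
  pose proof (Abel tc) as HA. rewrite radius_tc in HA.
  specialize (HA ltac:(simpl; lra) ltac:(simpl; exact I) ex_pseries_tc_1).
  simpl in HA. rewrite PSeries_tc_1 in HA.
  destruct (HA _ (locally_ball catalan (mkposreal eps Heps))) as [del Hdel].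
  exists del. split; [apply cond_pos|]. intros y Hy.
  assert (Hb : ball 1 del y).
  { unfold ball; simpl; unfold AbsRing_ball, abs, minus, plus, opp; simpl.
    rewrite Rabs_left by lra. lra. }
  specialize (Hdel y Hb ltac:(lra)).
  unfold ball in Hdel; simpl in Hdel; unfold AbsRing_ball, abs, minus, plus, opp in Hdel; simpl in Hdel.
  exact Hdel.
Qed.

Lemma atan_le w : 0 <= w -> 0 <= atan w <= w.
Proof.
  intros Hw. split.
  - destruct (Req_dec w 0) as [->|Hne]; [rewrite atan_0; lra|].
    rewrite <- atan_0. left. apply atan_increasing. lra.
  - destruct (Req_dec w 0) as [->|Hne]; [rewrite atan_0; lra|].
    destruct (MVT_gen (fun t => t - atan t) 0 w (fun t => 1 - / (1 + t²))) as [c [Hc Heq]].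
    + intros x _. apply (is_derive_minus (fun t => t) atan). auto_derive; auto. apply is_derive_atan.
    + intros x _. apply ex_derive_cont. apply (ex_derive_minus (fun t => t) atan).
      auto_derive; auto. exists (/ (1 + x²)). apply is_derive_atan.
    + rewrite Rmin_left, Rmax_right in Hc by lra.
      rewrite atan_0 in Heq.
      assert (0 <= 1 - / (1 + c²)).
      { unfold Rsqr. assert (1 <= 1 + c * c) by nra.
        assert (/ (1 + c * c) <= 1). { rewrite <- Rinv_1. apply Rinv_le_contravar; lra. } lra. }
      nra.
Qed.

Lemma ln_lt_self y : 0 < y -> ln y < y.
Proof.
  intros Hy. pose proof (exp_ineq1_le y).
  rewrite <- (ln_exp y) at 2. apply ln_increasing; auto. lra.
Qed.

Lemma atan_ln_bound w : 0 < w < 1 -> Rabs (atan w * ln w) <= 2 * sqrt w.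
Proof.
  intros Hw. set (s := sqrt w).
  assert (Hs : 0 < s) by (apply sqrt_lt_R0; lra).
  assert (Hss : s * s = w) by (apply sqrt_sqrt; lra).
  assert (Hl : ln w = 2 * ln s). { rewrite <- Hss. rewrite ln_mult by lra. ring. }
  assert (H1 : - ln s < / s). { rewrite <- ln_Rinv by lra. apply ln_lt_self. apply Rinv_0_lt_compat; lra. }
  assert (Hlw : ln w < 0). { rewrite <- ln_1. apply ln_increasing; lra. }
  destruct (atan_le w ltac:(lra)).
  rewrite Rabs_mult, Rabs_right by lra. rewrite Rabs_left by lra.
  apply Rle_trans with (w * (2 / s)).
  - apply Rmult_le_compat; try lra.
  - rewrite <- Hss at 1. right. field. lra.
Qed.

Definition g1 (w : R) : R := 2 * ln 2 * (PI / 4 - atan w) - atan w * ln w - 2 * Kf 1 + 2 * Kf w.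

Lemma g1_cont : continuity_pt g1 1.
Proof.
  apply ex_derive_cont. unfold g1. auto_derive. repeat split; try lra.
  exists (kf 1). apply Kf_deriv. lra.
Qed.

Lemma g1_1 : g1 1 = 0.
Proof. unfold g1. rewrite atan_1, ln_1. ring. Qed.

Lemma Ebar_left eps : 0 < eps -> exists del, 0 < del /\
  forall w, 1 - del < w < 1 -> Rabs (Ebar w) < eps.
Proof.
  intros Heps. pose proof (Rabs_pos catalan) as HGpos. set (e := eps / 12).
  assert (He : 0 < e) by (unfold e; lra).
  destruct (cont_eps g1 1 g1_cont e He) as [d1 [Hd1 H1]].
  destruct (tc_left e He) as [d2 [Hd2 H2]].
  set (M := Rabs catalan + 1).
  assert (HM : 0 < M) by (unfold M; pose proof (Rabs_pos catalan); lra).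
  set (d3 := e / M). assert (Hd3 : 0 < d3) by (unfold d3; apply Rdiv_lt_0_compat; lra).
  exists (Rmin (Rmin d1 (d2 / 2)) (Rmin d3 1)).
  split.
  { repeat apply Rmin_pos; lra. }
  intros w Hw.
  pose proof (Rmin_l (Rmin d1 (d2 / 2)) (Rmin d3 1)).
  pose proof (Rmin_r (Rmin d1 (d2 / 2)) (Rmin d3 1)).
  pose proof (Rmin_l d1 (d2 / 2)). pose proof (Rmin_r d1 (d2 / 2)).
  pose proof (Rmin_l d3 1). pose proof (Rmin_r d3 1).
  assert (Hg : Rabs (g1 w) < e).
  { rewrite <- (Rminus_0_r (g1 w)), <- g1_1. apply H1. rewrite Rabs_left; lra. }
  assert (Hp : Rabs (PSeries tc (w ^ 2) - catalan) < e).
  { apply H2. split; nra. }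
  assert (Hc : (1 - w) * Rabs catalan <= e).
  { apply Rle_trans with (d3 * Rabs catalan).
    - apply Rmult_le_compat_r; [apply Rabs_pos|lra].
    - unfold d3. unfold Rdiv. rewrite Rmult_assoc. rewrite <- (Rmult_1_r e) at 2.
      apply Rmult_le_compat_l; [lra|]. rewrite Rmult_comm. unfold M.
      apply (Rmult_le_reg_r (Rabs catalan + 1)); [pose proof (Rabs_pos catalan); lra|].
      rewrite Rmult_assoc, Rinv_l by lra. pose proof (Rabs_pos catalan). lra. }
  assert (HT : Rabs (Ti2 w - catalan) < 2 * e).
  { unfold Ti2.
    replace (w * PSeries tc (w ^ 2) - catalan) with
      (w * (PSeries tc (w ^ 2) - catalan) + (w - 1) * catalan) by ring.
    eapply Rle_lt_trans; [apply Rabs_triang|].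
    rewrite !Rabs_mult. rewrite (Rabs_right w) by lra. rewrite (Rabs_left (w - 1)) by lra.
    assert (w * Rabs (PSeries tc (w ^ 2) - catalan) <= Rabs (PSeries tc (w ^ 2) - catalan)).
    { pose proof (Rabs_pos (PSeries tc (w ^ 2) - catalan)). nra. }
    lra. }
  replace (Ebar w) with (-4 * (g1 w + (Ti2 w - catalan))) by (unfold Ebar, g1; ring).
  rewrite Rabs_mult. rewrite Rabs_left by lra.
  pose proof (Rabs_triang (g1 w) (Ti2 w - catalan)). unfold e in *. lra.
Qed.

Definition g2 (w : R) : R := - 2 * ln 2 * atan w + Ti2 w + 2 * Kf w.

Lemma g2_cont : continuity_pt g2 0.
Proof.
  apply ex_derive_cont. unfold g2, Ti2. auto_derive. repeat split.
  - apply ex_derive_PSeries. apply R1_inside. apply R1_tc. simpl. rewrite Rmult_0_l, Rabs_R0. lra.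
  - exists (kf 0). apply Kf_deriv. lra.
Qed.

Lemma g2_0 : g2 0 = 0.
Proof. unfold g2, Ti2. rewrite atan_0, Kf_0. ring. Qed.

Definition Lval : R := 4 * catalan - PI * ln 2.

Lemma Ebar_right eps : 0 < eps -> exists del, 0 < del /\
  forall w, 0 < w < del -> Rabs (Ebar w - Lval) < eps.
Proof.
  intros Heps.
  destruct (cont_eps g2 0 g2_cont (eps / 8) ltac:(lra)) as [d1 [Hd1 H1]].
  set (d2 := (eps / 16) ^ 2). assert (Hd2 : 0 < d2) by (unfold d2; apply pow_lt; lra).
  exists (Rmin (Rmin d1 d2) 1). split. { repeat apply Rmin_pos; lra. }
  intros w Hw.
  pose proof (Rmin_l (Rmin d1 d2) 1). pose proof (Rmin_r (Rmin d1 d2) 1).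
  pose proof (Rmin_l d1 d2). pose proof (Rmin_r d1 d2).
  assert (Hg : Rabs (g2 w) < eps / 8).
  { rewrite <- (Rminus_0_r (g2 w)), <- g2_0. apply H1. rewrite Rminus_0_r, Rabs_right; lra. }
  assert (Ha : Rabs (atan w * ln w) < eps / 8).
  { eapply Rle_lt_trans; [apply atan_ln_bound; lra|].
    assert (sqrt w < eps / 16).
    { rewrite <- (sqrt_pow2 (eps / 16)) by lra. apply sqrt_lt_1; [lra|apply pow2_ge_0|fold d2; lra]. }
    lra. }
  replace (Ebar w - Lval) with (-4 * (g2 w - atan w * ln w)).
  2:{ unfold Ebar, g2, Lval. rewrite Kf_1. field. }
  rewrite Rabs_mult, Rabs_left by lra.
  pose proof (Rabs_triang (g2 w) (- (atan w * ln w))). rewrite Rabs_Ropp in H4.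
  unfold Rminus. lra.
Qed.

Lemma wu_range w : 0 < w < 1 -> 0 < wu w < 1.
Proof.
  intros Hw. unfold wu. split.
  - apply Rdiv_lt_0_compat; lra.
  - apply (Rmult_lt_reg_r (1 + w)); [lra|]. unfold Rdiv. rewrite Rmult_assoc, Rinv_l by lra. lra.
Qed.

Lemma wu_invol u : -1 < u -> wu (wu u) = u.
Proof. intros H. unfold wu. field. lra. Qed.

Definition Dt (w : R) : R := Qf (wu w) - Ebar w.

Lemma Dt_deriv w : 0 < w < 1 -> is_derive Dt w 0.
Proof.
  intros Hw. destruct (wu_range w Hw) as [Hu1 Hu2].
  pose proof (is_derive_comp Qf wu w _ _ (Q_deriv (wu w) ltac:(lra)) (wu_deriv w ltac:(lra))) as H1.
  pose proof (Ebar_deriv w Hw) as H2.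
  pose proof (is_derive_minus _ _ w _ _ H1 H2) as H3.
  eapply is_derive_ext; [|refine (eq_ind _ (fun d => is_derive _ w d) H3 _ _)].
  - intros; reflexivity.
  - simpl. unfold scal, minus, plus, opp; simpl. unfold mult; simpl.
    match goal with |- ?a = ?b => change (a = b :> R) end.
    assert (Hl : ln (1 - wu w ^ 2) = 2 * ln 2 + ln w - 2 * ln (1 + w)).
    { replace (1 - wu w ^ 2) with ((2 * 2) * w / ((1 + w) ^ 2)) by (unfold wu; field; lra).
      rewrite ln_div, ln_mult, ln_mult, ln_pow; try lra; try nra; try (apply pow_lt; lra). simpl. ring. }


    change (wu w * (wu w * 1)) with (wu w ^ 2). rewrite Hl. unfold wu. field. repeat split; nra.
Qed.

Lemma Dt_const w : 0 < w < 1 -> Dt w = Dt (1 / 2).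
Proof.
  intros Hw.
  assert (Hc : forall t, 0 < t < 1 -> continuity_pt Dt t).
  { intros t Ht. eapply cont_of_derive. apply Dt_deriv; auto. }
  destruct (Rle_dec w (1/2)).
  - symmetry. apply const_interval; auto.
    + intros; apply Hc; lra.
    + intros; apply Dt_deriv; lra.
  - apply const_interval; [lra| |].
    + intros; apply Hc; lra.
    + intros; apply Dt_deriv; lra.
Qed.

Lemma Qf_0 : Qf 0 = 0.
Proof. unfold Qf, xu. replace (2 * 0 / (1 + 0 ^ 2)) with 0 by (simpl; field). ring. Qed.

Lemma Dt_zero w : 0 < w < 1 -> Dt w = 0.
Proof.
  intros Hw. rewrite (Dt_const w Hw).
  set (c := Dt (1 / 2)).
  assert (forall eps, 0 < eps -> Rabs c < eps).
  { intros eps Heps.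
    destruct (Ebar_left (eps / 2) ltac:(lra)) as [d1 [Hd1 H1]].
    assert (HQ := cont_eps Qf 0 (cont_of_derive _ _ _ (Q_deriv 0 ltac:(lra))) (eps / 2) ltac:(lra)).
    destruct HQ as [d2 [Hd2 H2]].
    assert (Hd : 0 < Rmin (Rmin d1 d2) 1) by (repeat apply Rmin_pos; lra).
    remember (Rmin (Rmin d1 d2) 1) as dl eqn:Edl.
    assert (Hdl1 : dl <= d1) by (rewrite Edl; eapply Rle_trans; [apply Rmin_l|apply Rmin_l]).
    assert (Hdl2 : dl <= d2) by (rewrite Edl; eapply Rle_trans; [apply Rmin_l|apply Rmin_r]).
    assert (Hdl3 : dl <= 1) by (rewrite Edl; apply Rmin_r).
    remember (1 - dl / 2) as w0 eqn:Ew0.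
    assert (Hw0 : 0 < w0 < 1) by lra.
    assert (Hc0 : c = Dt w0) by (symmetry; apply Dt_const; auto).
    rewrite Hc0. unfold Dt.
    specialize (H1 w0 ltac:(lra)).
    destruct (wu_range w0 Hw0).
    assert (Hq : Rabs (Qf (wu w0)) < eps / 2).
    { replace (Qf (wu w0)) with (Qf (wu w0) - Qf 0) by (rewrite Qf_0; ring). apply H2.
      rewrite Rminus_0_r, Rabs_right by lra.
      assert (wu w0 <= 1 - w0).
      { unfold wu. apply (Rmult_le_reg_r (1 + w0)); [lra|]. unfold Rdiv. rewrite Rmult_assoc, Rinv_l by lra. nra. }
      lra. }
    pose proof (Rabs_triang (Qf (wu w0)) (- Ebar w0)) as HT. rewrite Rabs_Ropp in HT.
    unfold Rminus. lra. }
  destruct (Req_dec c 0); auto.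
  specialize (H (Rabs c) ltac:(apply Rabs_pos_lt; auto)). lra.
Qed.

Lemma Qf_eq u : 0 < u < 1 -> Qf u = Ebar (wu u).
Proof.
  intros Hu. pose proof (Dt_zero (wu u) (wu_range u Hu)) as H.
  unfold Dt in H. rewrite wu_invol in H by lra. lra.
Qed.

Lemma Qf_left eps : 0 < eps -> exists del, 0 < del /\
  forall u, 1 - del < u < 1 -> Rabs (Qf u - Lval) < eps.
Proof.
  intros Heps. destruct (Ebar_right eps Heps) as [d [Hd H]].
  exists (Rmin d 1). split. { apply Rmin_pos; lra. }
  intros u Hu. pose proof (Rmin_l d 1). pose proof (Rmin_r d 1).
  rewrite Qf_eq by lra. apply H.
  destruct (wu_range u ltac:(lra)). split; auto.
  assert (wu u <= 1 - u).
  { unfold wu. apply (Rmult_le_reg_r (1 + u)); [lra|]. unfold Rdiv. rewrite Rmult_assoc, Rinv_l by lra. nra. }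
  lra.
Qed.

Lemma sum_n_Sn_R (a : nat -> R) n : sum_n a (S n) = sum_n a n + a (S n).
Proof. rewrite sum_Sn. reflexivity. Qed.

Lemma sum_n_le_R (a b : nat -> R) N : (forall n, (n <= N)%nat -> a n <= b n) -> sum_n a N <= sum_n b N.
Proof.
  induction N as [|N IH]; intros H.
  - rewrite !sum_O. apply H. lia.
  - rewrite !sum_n_Sn_R. apply Rplus_le_compat; [apply IH; intros; apply H; lia| apply H; lia].
Qed.

Lemma sum_n_nonneg_mono (a : nat -> R) m n : (forall k, 0 <= a k) -> (m <= n)%nat -> sum_n a m <= sum_n a n.
Proof.
  intros Ha Hmn. induction Hmn as [|n Hmn IH]; [lra|].
  rewrite sum_n_Sn_R. specialize (Ha (S n)). lra.
Qed.

Lemma sum_n_scal_R (c : R) (a : nat -> R) N : sum_n (fun n => c * a n) N = c * sum_n a N.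
Proof.
  induction N as [|N IH].
  - rewrite !sum_O. reflexivity.
  - rewrite !sum_n_Sn_R, IH. match goal with |- ?a = ?b => change (a = b :> R) end. ring.
Qed.

Lemma is_lim_sum_series (a : nat -> R) : ex_series a -> is_lim_seq (sum_n a) (Series a).
Proof. intros H. apply (Series_correct a H). Qed.

Lemma partial_le_series (a : nat -> R) N : (forall k, 0 <= a k) -> ex_series a -> sum_n a N <= Series a.
Proof.
  intros Ha He.
  pose proof (is_lim_sum_series a He) as Hl.
  apply (is_lim_seq_incr_n _ N) in Hl.
  assert (Hle := is_lim_seq_le (fun _ => sum_n a N) (fun n => sum_n a (n + N)) (sum_n a N) (Series a)).
  apply Hle; auto.
  - intros n. apply sum_n_nonneg_mono; auto. lia.
  - apply is_lim_seq_const.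
Qed.

Lemma pow_le_one z k : 0 <= z <= 1 -> z ^ k <= 1.
Proof.
  intros Hz. induction k as [|k IH]; simpl; [lra|].
  assert (0 <= z ^ k) by (apply pow_le; lra). nra.
Qed.

Lemma term_0 : term 0 = 0.
Proof. unfold term. rewrite harmonic_0. unfold Rdiv. ring. Qed.

Lemma xu_range u : 0 < u < 1 -> 0 < xu u < 1.
Proof.
  intros Hu. unfold xu. pose proof (one_plus_sq_pos u). split.
  - apply Rdiv_lt_0_compat; lra.
  - apply (Rmult_lt_reg_r (1 + u ^ 2)); [lra|]. unfold Rdiv. rewrite Rmult_assoc, Rinv_l by lra. nra.
Qed.

Lemma term_nonneg n : 0 <= term n.
Proof. apply term_bounds. Qed.

Lemma ex_series_term_z z : 0 <= z < 1 -> ex_series (fun n => term n * z ^ n).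
Proof.
  intros Hz. pose proof (R1_ex term z R1_term ltac:(rewrite Rabs_right; lra)) as H.
  apply ex_series_ext with (fun k => scal (pow_n z k) (term k)); auto.
  intros n. unfold scal; simpl; unfold mult; simpl. rewrite pow_n_pow. ring.
Qed.

Lemma Qf_lower u N : 0 < u < 1 -> xu u ^ (2 * N + 1) * sum_n term N <= Qf u.
Proof.
  intros Hu. destruct (xu_range u Hu) as [Hx1 Hx2].
  assert (Hz : 0 <= zu u < 1) by (apply zu_bounds; lra).
  unfold Qf, PSeries.
  apply Rle_trans with (xu u * sum_n (fun n => term n * zu u ^ n) N).
  - replace (xu u ^ (2 * N + 1)) with (xu u * zu u ^ N).
    2:{ unfold zu. rewrite <- pow_mult. rewrite pow_add. simpl. ring. }
    rewrite Rmult_assoc. apply Rmult_le_compat_l; [lra|].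
    rewrite <- sum_n_scal_R. apply sum_n_le_R. intros n Hn.
    rewrite Rmult_comm. apply Rmult_le_compat_l; [apply term_nonneg|].
    replace N with (n + (N - n))%nat by lia. rewrite pow_add.
    rewrite <- (Rmult_1_r (zu u ^ n)) at 2. apply Rmult_le_compat_l.
    + apply pow_le; lra.
    + apply pow_le_one; lra.
  - apply Rmult_le_compat_l; [lra|]. apply partial_le_series.
    + intros k. apply Rmult_le_pos; [apply term_nonneg| apply pow_le; lra].
    + apply ex_series_term_z; auto.
Qed.

Lemma sum_term_nonneg N : 0 <= sum_n term N.
Proof.
  apply Rle_trans with (sum_n term 0).
  - rewrite sum_O. apply term_nonneg.
  - apply sum_n_nonneg_mono; [apply term_nonneg|lia].
Qed.

Lemma T_le N : sum_n term N <= Lval.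
Proof.
  set (T := sum_n term N).
  destruct (Rle_lt_dec T Lval) as [|Hlt]; auto. exfalso.
  set (gap := T - Lval). assert (Hg : 0 < gap) by (unfold gap; lra).
  pose proof (sum_term_nonneg N) as HT. fold T in HT.
  set (h := fun u => xu u ^ (2 * N + 1)).
  assert (Hh : continuity_pt h 1).
  { apply ex_derive_cont. unfold h, xu. auto_derive. simpl. lra. }
  assert (Hh1 : h 1 = 1). { unfold h, xu. replace (2 * 1 / (1 + 1 ^ 2)) with 1 by (simpl; field). apply pow1. }
  destruct (cont_eps h 1 Hh (gap / (2 * (T + 1))) ltac:(apply Rdiv_lt_0_compat; lra)) as [d1 [Hd1 H1]].
  destruct (Qf_left (gap / 2) ltac:(lra)) as [d2 [Hd2 H2]].
  assert (Hd : 0 < Rmin (Rmin d1 d2) 1) by (repeat apply Rmin_pos; lra).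
  remember (Rmin (Rmin d1 d2) 1) as dl eqn:Edl.
  assert (Hdl1 : dl <= d1) by (rewrite Edl; eapply Rle_trans; [apply Rmin_l|apply Rmin_l]).
  assert (Hdl2 : dl <= d2) by (rewrite Edl; eapply Rle_trans; [apply Rmin_l|apply Rmin_r]).
  assert (Hdl3 : dl <= 1) by (rewrite Edl; apply Rmin_r).
  remember (1 - dl / 2) as u eqn:Eu.
  assert (Hu : 0 < u < 1) by lra.
  specialize (H1 u ltac:(rewrite Rabs_left; lra)). rewrite Hh1 in H1.
  specialize (H2 u ltac:(lra)).
  pose proof (Qf_lower u N Hu) as HQ. fold T in HQ. change (xu u ^ (2 * N + 1)) with (h u) in HQ.
  assert (Hhu : h u * T > T - gap / 2).
  { assert (Habs : Rabs ((h u - 1) * T) <= gap / (2 * (T + 1)) * T).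
    { rewrite Rabs_mult, (Rabs_right T) by lra. apply Rmult_le_compat_r; lra. }
    assert (gap / (2 * (T + 1)) * T < gap / 2).
    { assert (E : gap / (2 * (T + 1)) * T = gap / 2 - gap / (2 * (T + 1))) by (field; lra).
      assert (0 < gap / (2 * (T + 1))) by (apply Rdiv_lt_0_compat; lra). lra. }
    assert (Hlt2 : Rabs ((h u - 1) * T) < gap / 2) by lra.
    apply Rabs_def2 in Hlt2. lra. }
  apply Rabs_def2 in H2. unfold gap in *. lra.
Qed.

Lemma sum_term_lim : is_lim_seq (sum_n term) Lval.
Proof.
  apply is_lim_seq_spec. intros [eps Heps]. simpl.
  destruct (Qf_left (eps / 2) ltac:(lra)) as [d [Hd H]].
  remember (1 - Rmin d 1 / 2) as u eqn:Eu.
  pose proof (Rmin_l d 1). pose proof (Rmin_r d 1).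
  assert (0 < Rmin d 1) by (apply Rmin_pos; lra).
  assert (Hu : 0 < u < 1) by lra.
  specialize (H u ltac:(lra)). apply Rabs_def2 in H as [Hq1 Hq2].
  destruct (xu_range u Hu) as [Hx1 Hx2].
  assert (Hz : 0 <= zu u < 1) by (apply zu_bounds; lra).
  set (a := fun n => term n * zu u ^ n).
  assert (Hea : ex_series a) by (apply ex_series_term_z; auto).
  pose proof (is_lim_sum_series a Hea) as Hl.
  apply is_lim_seq_spec in Hl. destruct (Hl (mkposreal (eps / 2) ltac:(lra))) as [N0 HN0].
  simpl in HN0.
  exists N0. intros n Hn.
  specialize (HN0 N0 (le_n _)). apply Rabs_def2 in HN0 as [Hs1 Hs2].
  assert (HQ : Qf u = xu u * Series a) by reflexivity.
  assert (Hup := T_le n).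
  assert (Hlow : xu u * sum_n a N0 <= sum_n term n).
  { apply Rle_trans with (sum_n term N0); [|apply sum_n_nonneg_mono; auto; apply term_nonneg].
    rewrite <- sum_n_scal_R. apply sum_n_le_R. intros k _. unfold a.
    pose proof (term_nonneg k).
    assert (0 <= zu u ^ k <= 1) by (split; [apply pow_le; lra|apply pow_le_one; lra]).
    assert (0 <= term k * zu u ^ k <= term k) by (split; nra).
    nra. }
  assert (xu u * sum_n a N0 >= xu u * Series a - eps / 2).
  { assert (Hps : sum_n a N0 <= Series a).
    { apply partial_le_series; auto. intros k. unfold a. apply Rmult_le_pos; [apply term_nonneg|apply pow_le; lra]. }
    assert (xu u * (Series a - sum_n a N0) <= eps / 2).
    { apply Rle_trans with (1 * (eps / 2)); [|lra]. apply Rmult_le_compat; lra. }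
    lra. }
  apply Rabs_def1; lra.
Qed.

Theorem mainTheorem6 :
  is_series (fun k : nat => term (S k)) (4 * catalan - PI * ln 2).
Proof.
  apply is_series_incr_1.
  eapply filterlim_ext; [intros; reflexivity|].
  pose proof sum_term_lim as Hs. unfold is_lim_seq in Hs.
  match goal with |- filterlim _ _ (locally ?l) => replace l with Lval end.
  - exact Hs.
  - rewrite term_0. unfold Lval, plus; simpl. ring.
Qed.
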